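(* Let $(R,\Lambda,S)$ be a generalised Renner–Coxeter system. (i) For every chain $e_1\le e_2\le\cdots\le e_m$ in $E(R)$ there exist $w\in G(R)$ and a chain $f_1\le f_2\le\cdots\le f_m$ in $\Lambda$ such that $wf_iw^{-1}=e_i$ for every $i$. (ii) If $\Lambda$ has a least element $e$, then $\lambda(e)=S$. (iii) For all $e,f\in\Lambda$ and $w\in\mathrm{Red}(e,f)$, $ewf=\max\{h\in\Lambda\mid h\le e,\ h\le f,\ w\in W(h)\}=fw^{-1}e$.
   Context: For a monoid $R$, $E(R)$ is its set of idempotents, $G(R)$ its unit group. $R$ is factorisable if $R=E(R)G(R)=G(R)E(R)$ and idempotents commute; then $E(R)$ is a semilattice ($e\le f\iff ef=fe=e$) on which $G(R)$ acts by conjugation. For $e\in E(R)$, $W(e)=\{w\in G(R)\mid we=ew\}$, $W_\star(e)=\{w\mid we=ew=e\}$. For a Coxeter system $(W,S)$, $W_I$ is the subgroup generated by $I\subseteq S$. A generalised Renner–Coxeter system is a triple $(R,\Lambda,S)$ with: (ECS1) $R$ factorisable; (ECS2) $\Lambda\subseteq E(R)$ contains exactly one element of each $G(R)$-orbit and is closed under multiplication; (ECS3) $(G(R),S)$ is a Coxeter system; (ECS4) for $e_1\le e_2$ in $E(R)$ there are $w\in G(R)$, $f_1\le f_2$ in $\Lambda$ with $wf_iw^{-1}=e_i$; (ECS5) for $e\in\Lambda$, $W(e)$, $W_\star(e)$ are of the form $W_I$; (ECS6) with $\lambda^\star(e)=\{s\in S\mid se=es\ne e\}$, $e\le f$ in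 $\Lambda$ implies $\lambda^\star(e)\subseteq\lambda^\star(f)$. For $e\in\Lambda$, $\lambda(e)\subseteq S$ is defined by $W(e)=W_{\lambda(e)}$. $\mathrm{Red}(e,f)$ is the set of $w\in G(R)$ of minimal Coxeter length in $W_{\lambda(e)}wW_{\lambda(f)}$. *)

(* Defs.v *)
From Stdlib Require Import List.
Import ListNotations.

Record monoid := Monoid {
  mcar :> Type;
  mmul : mcar -> mcar -> mcar;
  mone : mcar;
  mmulA : forall x y z, mmul x (mmul y z) = mmul (mmul x y) z;
  mmul1l : forall x, mmul mone x = x;
  mmul1r : forall x, mmul x mone = x
}.
Arguments mmul {m}.
Arguments mone {m}.

Record group := Group {
  gcar :> Type;
  gmul : gcar -> gcar -> gcar;
  gone : gcar;
  ginv : gcar -> gcar;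
  gmulA : forall x y z, gmul x (gmul y z) = gmul (gmul x y) z;
  gmul1l : forall x, gmul gone x = x;
  gmulVl : forall x, gmul (ginv x) x = gone
}.
Arguments gmul {g}.
Arguments gone {g}.
Arguments ginv {g}.

Fixpoint gpow (H : group) (x : H) (n : nat) : H :=
  match n with O => gone | S k => gmul x (gpow H x k) end.
Fixpoint mpow (M : monoid) (x : M) (n : nat) : M :=
  match n with O => mone | S k => mmul x (mpow M x k) end.

Section Defs.
Variable R : monoid.
Local Notation "x * y" := (mmul x y).
Local Notation "1" := (@mone R).

Definition is_unit (x : R) : Prop := exists y : R, x * y = 1 /\ y * x = 1.
Definition idem (x : R) : Prop := x * x = x.
Definition sle (e f : R) : Prop := e * f = e /\ f * e = e.
Definition conj_to (w f e : R) : Prop :=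
  exists w' : R, w * w' = 1 /\ w' * w = 1 /\ w * f * w' = e.

Definition factorisable : Prop :=
  (forall x : R, exists e g, idem e /\ is_unit g /\ x = e * g) /\
  (forall x : R, exists g e, is_unit g /\ idem e /\ x = g * e) /\
  (forall e f : R, idem e -> idem f -> e * f = f * e).

Definition wprod (l : list R) : R := fold_right mmul 1 l.
Definition in_WI (I : R -> Prop) (w : R) : Prop :=
  exists l : list R, Forall I l /\ wprod l = w.
Definition has_word_len (S : R -> Prop) (w : R) (n : nat) : Prop :=
  exists l : list R, Forall S l /\ wprod l = w /\ length l = n.

(* (G(R), S) is a Coxeter system: S consists of involutions generating G(R),
   and G(R) has the presentation < S | (st)^{m(s,t)} = 1 >, m(s,t) the order
   of st, expressed by the universal property of the presentation. *)
Definition coxeter_system (S : R -> Prop) : Prop :=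
  (forall s, S s -> is_unit s) /\
  (forall s, S s -> s * s = 1 /\ s <> 1) /\
  (forall w, is_unit w -> in_WI S w) /\
  (forall (H : group) (f : R -> H),
     (forall s t n, S s -> S t -> mpow R (s * t) n = 1 ->
         gpow H (gmul (f s) (f t)) n = gone) ->
     exists phi : R -> H,
       (forall x y, is_unit x -> is_unit y -> phi (x * y) = gmul (phi x) (phi y)) /\
       (forall s, S s -> phi s = f s)).

Definition W (e w : R) : Prop := is_unit w /\ w * e = e * w.
Definition Wstar (e w : R) : Prop := is_unit w /\ w * e = e /\ e * w = e.
Definition lambda_star (S : R -> Prop) (e s : R) : Prop := S s /\ s * e = e * s /\ s * e <> e.

Definition is_parabolic (S : R -> Prop) (X : R -> Prop) : Prop :=
  exists I : R -> Prop, (forall s, I s -> S s) /\ (forall w, X w <-> in_WI I w).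

(* I is lambda(e), i.e. I ⊆ S and W(e) = W_I *)
Definition is_lambda (S : R -> Prop) (e : R) (I : R -> Prop) : Prop :=
  (forall s, I s -> S s) /\ (forall w, W e w <-> in_WI I w).

Definition gen_renner_coxeter (Lam : R -> Prop) (S : R -> Prop) : Prop :=
  (* ECS1 *) factorisable /\
  (* ECS2 *) (forall f, Lam f -> idem f) /\
             (forall e, idem e -> exists f w, Lam f /\ is_unit w /\ conj_to w f e) /\
             (forall f1 f2 w, Lam f1 -> Lam f2 -> is_unit w -> conj_to w f1 f2 -> f1 = f2) /\
             (forall f1 f2, Lam f1 -> Lam f2 -> Lam (f1 * f2)) /\
  (* ECS3 *) coxeter_system S /\
  (* ECS4 *) (forall e1 e2, idem e1 -> idem e2 -> sle e1 e2 ->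
                exists w f1 f2, is_unit w /\ Lam f1 /\ Lam f2 /\ sle f1 f2 /\
                  conj_to w f1 e1 /\ conj_to w f2 e2) /\
  (* ECS5 *) (forall e, Lam e -> is_parabolic S (W e) /\ is_parabolic S (Wstar e)) /\
  (* ECS6 *) (forall e f, Lam e -> Lam f -> sle e f ->
                forall s, lambda_star S e s -> lambda_star S f s).

(* w in Red(e,f): w of minimal Coxeter length in W(e) w W(f)
   (W_{lambda(e)} = W(e) by definition of lambda) *)
Definition Red (S : R -> Prop) (e f w : R) : Prop :=
  is_unit w /\
  forall a b v n, W e a -> W f b -> v = a * w * b -> has_word_len S v n ->
    exists m, m <= n /\ has_word_len S w m.

End Defs.

(* Main.v *)
Require Import Defs.
From Stdlib Require Import List Arith Lia Classical ClassicalEpsilon ProofIrrelevance FunctionalExtensionality Bool.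
Import ListNotations.


Section Mon.
Variable R : monoid.
Local Infix "⋅" := (@mmul R) (at level 40, left associativity).
Local Notation "'ι'" := (@mone R).

Lemma mA (x y z : R) : x ⋅ (y ⋅ z) = x ⋅ y ⋅ z.
Proof. apply mmulA. Qed.
Lemma m1l (x : R) : ι ⋅ x = x. Proof. apply mmul1l. Qed.
Lemma m1r (x : R) : x ⋅ ι = x. Proof. apply mmul1r. Qed.

Lemma inv_uniq (x y z : R) : x ⋅ y = ι -> z ⋅ x = ι -> y = z.
Proof. intros H1 H2. rewrite <- (m1l y), <- H2, <- mA, H1, m1r. reflexivity. Qed.

Lemma unit_mul x y : is_unit R x -> is_unit R y -> is_unit R (x ⋅ y).
Proof.
  intros [x' [H1 H2]] [y' [H3 H4]]. exists (y' ⋅ x'). split.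
  - rewrite <- mA, (mA y), H3, m1l; auto.
  - rewrite <- mA, (mA x'), H2, m1l; auto.
Qed.

Lemma conj_inv w f e : conj_to R w f e -> forall w', w ⋅ w' = ι -> w' ⋅ w = ι -> w ⋅ f ⋅ w' = e.
Proof.
  intros [w0 [H1 [H2 H3]]] w' H4 H5.
  assert (w0 = w') by (apply (inv_uniq w); auto). subst; auto.
Qed.

Lemma conj_back w w' f e : w ⋅ w' = ι -> w' ⋅ w = ι -> w ⋅ f ⋅ w' = e -> f = w' ⋅ e ⋅ w.
Proof.
  intros H1 H2 H3. subst e. rewrite !mA, H2, m1l, <- mA, H2, m1r. auto.
Qed.

End Mon.
Arguments mA {R}.
Arguments m1l {R}.
Arguments m1r {R}.
Arguments inv_uniq {R}.
Arguments unit_mul {R}.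
Arguments conj_inv {R}.
Arguments conj_back {R}.


Section Cox.
Variable R : monoid.
Local Infix "⋅" := (@mmul R) (at level 40, left associativity).
Local Notation "'ι'" := (@mone R).
Variable S : R -> Prop.
Variable HS : coxeter_system R S.

Lemma S_inv s : S s -> s ⋅ s = ι.
Proof. intro H. destruct HS as [_ [H2 _]]. apply H2; auto. Qed.

Definition eqb (x y : R) : bool := if excluded_middle_informative (x = y) then true else false.
Lemma eqb_true x y : eqb x y = true <-> x = y.
Proof. unfold eqb. destruct (excluded_middle_informative (x = y)); split; congruence. Qed.
Lemma eqb_false x y : eqb x y = false <-> x <> y.
Proof. unfold eqb. destruct (excluded_middle_informative (x = y)); split; congruence. Qed.
Lemma eqb_iff x y x' y' : (x = y <-> x' = y') -> eqb x y = eqb x' y'.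
Proof.
  intro H. destruct (eqb x y) eqn:E.
  - apply eqb_true in E. symmetry. apply eqb_true. tauto.
  - apply eqb_false in E. symmetry. apply eqb_false. tauto.
Qed.

Record HC := mkHC { hu : R; hv : R; hA : R -> bool; hp1 : hu ⋅ hv = ι; hp2 : hv ⋅ hu = ι }.

Lemma HC_eq (x y : HC) : hu x = hu y -> hv x = hv y -> (forall t, hA x t = hA y t) -> x = y.
Proof.
  destruct x as [u v A p1 p2], y as [u' v' A' p1' p2']; simpl. intros E1 E2 E3.
  subst u' v'. assert (A = A') by (apply functional_extensionality; auto). subst A'.
  f_equal; apply proof_irrelevance.
Qed.

Lemma hmul_p1 (x y : HC) : hu x ⋅ hu y ⋅ (hv y ⋅ hv x) = ι.
Proof. rewrite mA, <- (mA (hu x) (hu y)), hp1, m1r, hp1. auto. Qed.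
Lemma hmul_p2 (x y : HC) : hv y ⋅ hv x ⋅ (hu x ⋅ hu y) = ι.
Proof. rewrite mA, <- (mA (hv y) (hv x)), hp2, m1r, hp2. auto. Qed.

Definition hmul (x y : HC) : HC :=
  mkHC (hu x ⋅ hu y) (hv y ⋅ hv x) (fun t => xorb (hA x t) (hA y (hv x ⋅ t ⋅ hu x)))
    (hmul_p1 x y) (hmul_p2 x y).
Lemma one_p : ι ⋅ ι = ι. Proof. apply m1l. Qed.
Definition hone : HC := mkHC ι ι (fun _ => false) one_p one_p.
Definition hinv (x : HC) : HC := mkHC (hv x) (hu x) (fun t => hA x (hu x ⋅ t ⋅ hv x)) (hp2 x) (hp1 x).

Lemma hmulA x y z : hmul x (hmul y z) = hmul (hmul x y) z.
Proof.
  apply HC_eq; simpl.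
  - apply mA.
  - rewrite mA. auto.
  - intro t. rewrite xorb_assoc. f_equal. f_equal. f_equal. rewrite !mA. auto.
Qed.
Lemma hmul1l x : hmul hone x = x.
Proof. apply HC_eq; simpl. apply m1l. apply m1r. intro t. rewrite m1l, m1r. auto. Qed.
Lemma hmulVl x : hmul (hinv x) x = hone.
Proof. apply HC_eq; simpl. apply hp2. apply hp2. intro t. apply xorb_nilpotent. Qed.

Definition HG : group := Group HC hmul hone hinv hmulA hmul1l hmulVl.

Definition fS (r : R) : HC :=
  match excluded_middle_informative (S r) with
  | left H => mkHC r r (fun t => eqb t r) (S_inv r H) (S_inv r H)
  | right _ => hone
  end.

Lemma mpow_add (u : R) a b : mpow R u (a + b) = mpow R u a ⋅ mpow R u b.
Proof. induction a; simpl. rewrite m1l; auto. rewrite IHa, mA. auto. Qed.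
Lemma mpow_comm (u : R) j : mpow R u j ⋅ u = u ⋅ mpow R u j.
Proof. induction j; simpl. rewrite m1l, m1r; auto. rewrite <- mA, IHj. auto. Qed.

Section Rel.
Variables s t : R.
Hypothesis Hs : S s.
Hypothesis Ht : S t.
Let u := s ⋅ t.
Let v := t ⋅ s.
Lemma uv : u ⋅ v = ι.
Proof. unfold u, v. rewrite mA, <- (mA s t t), (S_inv t Ht), m1r, (S_inv s Hs). auto. Qed.
Lemma vu : v ⋅ u = ι.
Proof. unfold u, v. rewrite mA, <- (mA t s s), (S_inv s Hs), m1r, (S_inv t Ht). auto. Qed.

Fixpoint XR (n j : nat) (x : R) : bool :=
  match n with 0 => false | Datatypes.S n' => xorb (eqb x (mpow R u j ⋅ s)) (XR n' (Datatypes.S j) x) end.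

Lemma conj_iff x y : (v ⋅ x ⋅ u = y) <-> (x = u ⋅ y ⋅ v).
Proof.
  split; intro E; subst.
  - rewrite !mA, uv, m1l, <- mA, uv, m1r. auto.
  - rewrite !mA, vu, m1l, <- mA, vu, m1r. auto.
Qed.

Lemma pow_step j : u ⋅ (mpow R u j ⋅ s) ⋅ v = mpow R u (Datatypes.S (Datatypes.S j)) ⋅ s.
Proof.
  simpl. unfold v. rewrite !mA. rewrite <- (mA _ t s). rewrite <- (mA _ s (t ⋅ s)).
  rewrite (mA s t s). fold u. rewrite mA. f_equal.
  rewrite <- (mA u _ u), mpow_comm. rewrite mA. auto.
Qed.

Lemma XR_shift n j x : XR n j (v ⋅ x ⋅ u) = XR n (Datatypes.S (Datatypes.S j)) x.
Proof.
  revert j. induction n; intro j; simpl; auto. rewrite IHn. f_equal.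
  apply eqb_iff. rewrite conj_iff, pow_step. tauto.
Qed.

Lemma XR_add a b j x : XR (a + b) j x = xorb (XR a j x) (XR b (j + a) x).
Proof.
  revert j. induction a; intro j; simpl. rewrite Nat.add_0_r; auto.
  rewrite IHa, xorb_assoc. do 3 f_equal. lia.
Qed.

Lemma XR_per n a j x : mpow R u n = ι -> XR a (j + n) x = XR a j x.
Proof.
  intro H. revert j. induction a; intro j; simpl; auto.
  replace (Datatypes.S (j + n)) with (Datatypes.S j + n) by lia.
  rewrite IHa, mpow_add, H, m1r. reflexivity.
Qed.

Lemma fS_S r (H : S r) : fS r = mkHC r r (fun t => eqb t r) (S_inv r H) (S_inv r H).
Proof.
  unfold fS. destruct (excluded_middle_informative (S r)). f_equal; apply proof_irrelevance. contradiction.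
Qed.

Lemma gpow_Y n : hu (gpow HG (hmul (fS s) (fS t)) n) = mpow R u n /\
  forall x, hA (gpow HG (hmul (fS s) (fS t)) n) x = XR (n + n) 0 x.
Proof.
  rewrite (fS_S s Hs), (fS_S t Ht).
  induction n; simpl; auto. destruct IHn as [IH1 IH2]. split.
  - rewrite IH1. auto.
  - intro x. rewrite IH2. rewrite Nat.add_succ_r. simpl.
    rewrite xorb_assoc. f_equal.
    + apply eqb_iff. rewrite m1l. tauto.
    + f_equal.
      * apply eqb_iff. rewrite m1r. split; intro E.
        -- unfold u. rewrite <- E. rewrite !mA, (S_inv s Hs), m1l, <- mA, (S_inv s Hs), m1r. auto.
        -- rewrite E. unfold u. rewrite !mA, (S_inv s Hs), m1l, <- mA, (S_inv s Hs), m1r. auto.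
      * fold v. change (s ⋅ t) with u. rewrite XR_shift. auto.
Qed.

Lemma rel_ok n : mpow R (s ⋅ t) n = ι -> gpow HG (hmul (fS s) (fS t)) n = hone.
Proof.
  intro H. destruct (gpow_Y n) as [E1 E2].
  apply HC_eq; simpl.
  - rewrite E1. auto.
  - set (X := gpow HG (hmul (fS s) (fS t)) n).
    pose proof (hp1 X) as P. pose proof (hp2 X) as P2. fold X in E1. rewrite E1 in P. fold u in H. rewrite H in P.
    rewrite m1l in P. auto.
  - intro x. fold u in H. rewrite E2, XR_add, (XR_per n n 0 x H). apply xorb_nilpotent.
Qed.
End Rel.
End Cox.


Section Cox2.
Variable R : monoid.
Local Infix "⋅" := (@mmul R) (at level 40, left associativity).
Local Notation "'ι'" := (@mone R).
Variable S : R -> Prop.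
Variable HS : coxeter_system R S.
Local Notation wp := (wprod R).

Definition XS (L : list R) (x : R) : bool := fold_right (fun p b => xorb (eqb R x p) b) false L.
Fixpoint refl (l : list R) : list R :=
  match l with [] => [] | s :: l' => s :: map (fun y => s ⋅ y ⋅ s) (refl l') end.

Lemma XS_map s L x : S s -> XS (map (fun y => s ⋅ y ⋅ s) L) x = XS L (s ⋅ x ⋅ s).
Proof.
  intro Hs. induction L; simpl; auto. rewrite IHL. f_equal. apply eqb_iff. split; intro E.
  - subst x. rewrite !mA, (S_inv R S HS s Hs), m1l, <- mA, (S_inv R S HS s Hs), m1r. auto.
  - rewrite <- E. rewrite !mA, (S_inv R S HS s Hs), m1l, <- mA, (S_inv R S HS s Hs), m1r. auto.
Qed.

Lemma word_unit l : Forall S l -> is_unit R (wp l).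
Proof.
  induction 1; simpl. exists ι. split; apply m1l.
  apply unit_mul; auto. destruct HS as [H1 _]. apply H1; auto.
Qed.

Lemma NW l1 l2 : Forall S l1 -> Forall S l2 -> wp l1 = wp l2 -> forall x, XS (refl l1) x = XS (refl l2) x.
Proof.
  destruct HS as [Hu [Hi [Hg Huniv]]].
  destruct (Huniv (HG R) (fS R S HS)) as [phi [Hm Hf]].
  { intros s t n Hs Ht E. apply rel_ok; auto. }
  assert (P1 : phi ι = hone R).
  { assert (U : is_unit R ι) by (exists ι; split; apply m1l).
    pose proof (Hm ι ι U U) as E. rewrite m1l in E. change (phi ι = hmul R (phi ι) (phi ι)) in E.
    set (y := phi ι) in *. 
    assert (hmul R (hinv R y) (hmul R y y) = hmul R (hinv R y) y) by (rewrite <- E; auto).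
    rewrite hmulA, hmulVl, hmul1l in H. auto. }
  assert (PW : forall l, Forall S l -> hu R (phi (wp l)) = wp l /\ forall x, hA R (phi (wp l)) x = XS (refl l) x).
  { induction 1; simpl.
    - rewrite P1. simpl. auto.
    - destruct IHForall as [I1 I2].
      rewrite (Hm x (wp l) (Hu x H) (word_unit l H0)). rewrite (Hf x H), (fS_S R S HS x H). simpl.
      split. rewrite I1. auto.
      intro y. rewrite I2, XS_map; auto. }
  intros F1 F2 E x. destruct (PW l1 F1) as [_ A1]. destruct (PW l2 F2) as [_ A2].
  rewrite <- A1, <- A2, E. auto.
Qed.

Lemma refl_len l : length (refl l) = length l.
Proof. induction l; simpl; auto. rewrite length_map; auto. Qed.

Lemma XS_in L x : XS L x = true -> In x L.
Proof.
  induction L; simpl; [discriminate|]. intro H.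
  destruct (eqb R x a) eqn:E. apply eqb_true in E. auto. simpl in H. right; auto.
Qed.

Lemma XS_nodup L x : NoDup L -> In x L -> XS L x = true.
Proof.
  induction 1; simpl; [tauto|]. intros [E|I].
  - subst. assert (eqb R x x = true) by (apply eqb_true; auto). rewrite H1. simpl.
    destruct (XS l x) eqn:E; auto. apply XS_in in E. contradiction.
  - assert (eqb R x x0 = false) by (apply eqb_false; intro; subst; contradiction).
    rewrite H1. simpl. auto.
Qed.

Definition reduced (l : list R) : Prop :=
  Forall S l /\ forall l', Forall S l' -> wp l' = wp l -> length l <= length l'.

Lemma L1 l : Forall S l -> NoDup (refl l) -> reduced l.
Proof.
  intros F N. split; auto. intros l' F' E.
  rewrite <- (refl_len l), <- (refl_len l'). apply NoDup_incl_length; auto.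
  intros x I. apply XS_in. rewrite (NW l' l F' F E). apply XS_nodup; auto.
Qed.

Fixpoint del (i : nat) (l : list R) : list R :=
  match l, i with
  | [], _ => []
  | x :: l', O => l'
  | x :: l', Datatypes.S i' => x :: del i' l'
  end.

Lemma del_len i l : i < length l -> length (del i l) = length l - 1.
Proof. revert i; induction l; intros i H; simpl in *. lia. destruct i; simpl. lia. rewrite IHl; lia. Qed.
Lemma del_Forall (P : R -> Prop) i l : Forall P l -> Forall P (del i l).
Proof.
  revert i; induction l as [|a l IHl]; intros i H; destruct i; simpl; try constructor;
  inversion H; subst; auto.
Qed.
Lemma del_incl i l : incl (del i l) l.
Proof.
  revert i; induction l as [|a l IHl]; intros i; destruct i; simpl.
  - apply incl_refl.
  - apply incl_refl.
  - intros x I; right; auto.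
  - intros x [E|I]. left; auto. right. eapply IHl; eauto.
Qed.

Lemma nth_map_conj s L m : m < length L -> nth m (map (fun y => s ⋅ y ⋅ s) L) ι = s ⋅ nth m L ι ⋅ s.
Proof.
  intro H. rewrite (nth_indep _ _ ((fun y => s ⋅ y ⋅ s) ι)) by (rewrite length_map; auto).
  apply (map_nth (fun y => s ⋅ y ⋅ s)).
Qed.

Lemma conj_cancel t a b : S t -> t ⋅ a ⋅ t = t ⋅ b ⋅ t -> a = b.
Proof.
  intros Ht E.
  assert (HH : t ⋅ (t ⋅ a ⋅ t) ⋅ t = t ⋅ (t ⋅ b ⋅ t) ⋅ t) by (rewrite E; auto).
  rewrite !mA, (S_inv R S HS t Ht), m1l in HH.
  rewrite <- !mA, (S_inv R S HS t Ht), m1r in HH. rewrite m1l, m1r in HH. auto.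
Qed.

Lemma L2' k m y : Forall S k -> m < length k -> nth m (refl k) ι = y -> y ⋅ wp k = wp (del m k).
Proof.
  revert m y. induction k as [|t k IH]; intros m y F Hm E; simpl in *. lia.
  inversion F as [|? ? H1 H2]. destruct m.
  - subst y. rewrite mA, (S_inv R S HS t H1), m1l. auto.
  - rewrite nth_map_conj in E by (rewrite refl_len; lia). subst y. simpl.
    rewrite <- (IH m (nth m (refl k) ι)); auto; try lia.
    rewrite !mA, <- (mA (t ⋅ nth m (refl k) ι) t t), (S_inv R S HS t H1), m1r. auto.
Qed.

Lemma L2 k i j : Forall S k -> i < j -> j < length k -> nth i (refl k) ι = nth j (refl k) ι ->
  wp k = wp (del i (del j k)).
Proof.
  revert i j. induction k as [|t k IH]; intros i j F Hij Hj E; simpl in *. lia.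
  inversion F as [|? ? H1 H2]. destruct j. lia. destruct i.
  - simpl. rewrite nth_map_conj in E by (rewrite refl_len; lia).
    assert (En : nth j (refl k) ι = t).
    { transitivity (t ⋅ (t ⋅ nth j (refl k) ι ⋅ t) ⋅ t).
      - rewrite !mA, (S_inv R S HS t H1), m1l, <- mA, (S_inv R S HS t H1), m1r. auto.
      - rewrite <- E, (S_inv R S HS t H1), m1l. auto. }
    rewrite <- (L2' k j t); auto; try lia.
  - simpl. f_equal. apply IH; auto; try lia.
    rewrite !nth_map_conj in E by (rewrite refl_len; lia).
    apply (conj_cancel t); auto.
Qed.

End Cox2.


Section Cox3.
Variable R : monoid.
Local Infix "⋅" := (@mmul R) (at level 40, left associativity).
Local Notation "'ι'" := (@mone R).
Variable S : R -> Prop.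
Variable HS : coxeter_system R S.
Local Notation wp := (wprod R).
Local Notation red := (reduced R S).
Local Notation Sinv := (S_inv R S HS).

Lemma wp_app a b : wp (a ++ b) = wp a ⋅ wp b.
Proof. induction a; simpl. rewrite m1l; auto. rewrite IHa, mA; auto. Qed.

Lemma wp_rev l : Forall S l -> wp l ⋅ wp (rev l) = ι /\ wp (rev l) ⋅ wp l = ι.
Proof.
  induction 1; simpl. split; apply m1l.
  rewrite wp_app. simpl. rewrite m1r. destruct IHForall as [A B]. split.
  - rewrite mA, <- (mA x (wp l)), A, m1r, Sinv; auto.
  - rewrite mA, <- (mA _ x x), Sinv, m1r, B; auto.
Qed.

Lemma not_nodup (L : list R) : ~ NoDup L -> exists i j, i < j /\ j < length L /\ nth i L ι = nth j L ι.
Proof.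
  intro H. rewrite (NoDup_nth L ι) in H.
  apply not_all_ex_not in H. destruct H as [i H]. apply not_all_ex_not in H. destruct H as [j H].
  assert (i < length L /\ j < length L /\ nth i L ι = nth j L ι /\ i <> j) as [A [B [C D]]] by tauto.
  destruct (Nat.lt_gt_cases i j) as [[E|E] _]; auto.
  - exists i, j; auto.
  - exists j, i; auto.
Qed.

Lemma red_nodup l : red l -> NoDup (refl R l).
Proof.
  intros [F M]. apply NNPP. intro N. apply not_nodup in N. destruct N as [i [j [A [B C]]]].
  rewrite refl_len in B.
  pose proof (L2 R S HS l i j F A B C) as E.
  assert (Fd : Forall S (del R i (del R j l))) by (apply del_Forall, del_Forall; auto).
  specialize (M _ Fd (eq_sym E)).
  rewrite (del_len R i) in M by (rewrite del_len; lia). rewrite del_len in M by lia. lia.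
Qed.

Lemma RW n k : length k <= n -> Forall S k -> exists k', red k' /\ incl k' k /\ wp k' = wp k.
Proof.
  revert k. induction n; intros k Hl F.
  - destruct k; simpl in Hl; [|lia]. exists []. split. split; auto. intros; simpl; lia.
    split; auto. apply incl_refl.
  - destruct (classic (NoDup (refl R k))) as [N|N].
    + exists k. split. apply L1; auto. split; auto. apply incl_refl.
    + apply not_nodup in N. destruct N as [i [j [A [B C]]]]. rewrite refl_len in B.
      pose proof (L2 R S HS k i j F A B C) as E.
      destruct (IHn (del R i (del R j k))) as [k' [K1 [K2 K3]]].
      * rewrite (del_len R i) by (rewrite del_len; lia). rewrite del_len by lia. lia.
      * apply del_Forall, del_Forall; auto.
      * exists k'. split; auto. split. intros x I. apply (del_incl R j k), (del_incl R i (del R j k)), K2; auto.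
        rewrite K3; auto.
Qed.

Lemma red_tail s l : red (s :: l) -> red l.
Proof.
  intros [F M]. inversion F as [|? ? F1 F2]. split; auto. intros l' F' E.
  specialize (M (s :: l') (Forall_cons _ F1 F') ). simpl in M. rewrite E in M. specialize (M eq_refl). lia.
Qed.

Lemma map_nodup (f : R -> R) L : (forall a b, f a = f b -> a = b) -> NoDup L -> NoDup (map f L).
Proof.
  intros Hf N. induction N; simpl; constructor; auto.
  intro I. apply in_map_iff in I. destruct I as [y [E I]]. apply Hf in E. subst; auto.
Qed.

Lemma EX s l : red l -> S s -> red (s :: l) \/
  exists i, i < length l /\ s ⋅ wp l = wp (del R i l) /\ red (del R i l).
Proof.
  intros Hr Hs. destruct (classic (red (s :: l))) as [H|H]; [left; auto|right].
  assert (F : Forall S l) by (destruct Hr; auto).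
  assert (N : ~ NoDup (refl R (s :: l))) by (intro N; apply H, L1; auto).
  simpl in N. rewrite NoDup_cons_iff in N.
  assert (Nd : NoDup (map (fun y => s ⋅ y ⋅ s) (refl R l))).
  { apply map_nodup. intros a b E. apply (conj_cancel R S HS s); auto. apply red_nodup; auto. }
  assert (I : In s (map (fun y => s ⋅ y ⋅ s) (refl R l))) by (apply NNPP; tauto).
  apply in_map_iff in I. destruct I as [q [E I]].
  assert (q = s). { apply (conj_cancel R S HS s); auto. rewrite E, Sinv, m1l; auto. }
  subst q. apply In_nth with (d := ι) in I. destruct I as [m [Hm Em]]. rewrite refl_len in Hm.
  exists m. split; auto. 
  assert (E2 : s ⋅ wp l = wp (del R m l)) by (apply (L2' R S HS); auto).
  split; auto. split. apply del_Forall; auto.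
  intros l' F' E'. destruct Hr as [_ M].
  specialize (M (s :: l') (Forall_cons _ Hs F')). simpl in M. rewrite E', <- E2, mA, (Sinv s Hs), m1l in M.
  specialize (M eq_refl). rewrite del_len; try lia.
Qed.

Lemma C1 (I : R -> Prop) s k : S s -> (forall x, I x -> S x) -> Forall I k -> wp k = s -> I s.
Proof.
  intros Hs HI FI E.
  assert (FS : Forall S k) by (eapply Forall_impl; eauto).
  destruct (RW (length k) k (le_n _) FS) as [k' [[F' M] [Inc E']]].
  assert (L : length k' <= 1).
  { apply (M [s]). constructor; auto. simpl. rewrite m1r, E', E; auto. }
  destruct k' as [|t [|t2 k'']]; simpl in *.
  - destruct HS as [_ [H2 _]]. exfalso. apply (proj2 (H2 s Hs)). rewrite <- E, <- E'. auto.
  - rewrite m1r in E'. rewrite <- E, <- E'. rewrite Forall_forall in FI. apply FI, Inc. left; auto.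
  - lia.
Qed.

Lemma red_len l l' : red l -> red l' -> wp l = wp l' -> length l = length l'.
Proof. intros [F M] [F' M'] E. specialize (M l' F' (eq_sym E)). specialize (M' l F E). lia. Qed.

Lemma SL (I : R -> Prop) : (forall x, I x -> S x) ->
  forall l, red l -> forall k, Forall I k -> wp k = wp l -> Forall I l.
Proof.
  intros HI l. induction l as [|s l IH]; intros Hr k FI E; [constructor|].
  assert (FS : Forall S k) by (eapply Forall_impl; eauto).
  destruct (RW (length k) k (le_n _) FS) as [m [Rm [Inc Em]]].
  assert (FIm : Forall I m) by (rewrite Forall_forall in *; auto).
  assert (Hs : S s) by (destruct Hr as [F _]; inversion F; auto).
  assert (Fl : Forall S l) by (destruct Hr as [F _]; inversion F; auto).
  assert (Lm : length m = length (s :: l)) by (apply red_len; auto; rewrite Em; auto).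
  assert (El : wp l = s ⋅ wp (s :: l)) by (simpl; rewrite mA, (Sinv s Hs), m1l; auto).
  destruct (EX s m Rm Hs) as [Hr2|[i [Hi [Ei Ri]]]].
  - exfalso. destruct Hr2 as [_ M2]. specialize (M2 l Fl). simpl in M2.
    rewrite Em, E, <- El in M2. specialize (M2 eq_refl). simpl in Lm. lia.
  - constructor.
    + apply (C1 I s (del R i m ++ rev m)); auto.
      * apply Forall_app. split. apply del_Forall; auto. apply Forall_rev; auto.
      * rewrite wp_app, <- Ei. destruct (wp_rev m) as [A _]. destruct Rm; auto.
        rewrite <- mA, A, m1r. auto.
    + apply (IH (red_tail s l Hr) (del R i m)). apply del_Forall; auto.
      rewrite <- Ei, Em, E, El. auto.
Qed.

End Cox3.


Section Cox4.
Variable R : monoid.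
Local Infix "⋅" := (@mmul R) (at level 40, left associativity).
Local Notation "'ι'" := (@mone R).
Variable S : R -> Prop.
Variable HS : coxeter_system R S.
Local Notation wp := (wprod R).
Local Notation red := (reduced R S).
Local Notation Sinv := (S_inv R S HS).
Local Notation del := (del R).

Definition MinD (I J : R -> Prop) (lw : list R) : Prop :=
  forall la lc lv, Forall I la -> Forall J lc -> Forall S lv -> wp lv = wp la ⋅ wp lw ⋅ wp lc ->
    length lw <= length lv.

Lemma canc (x y y' : R) : y ⋅ y' = ι -> x ⋅ y ⋅ y' = x.
Proof. intro H. rewrite <- mA, H, m1r. auto. Qed.

Lemma del_app_l i a b : i < length a -> del i (a ++ b) = del i a ++ b.
Proof. revert i; induction a; intros i H; simpl in *. lia. destruct i; simpl; auto. rewrite IHa; auto; lia. Qed.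
Lemma del_app_r i a b : length a <= i -> del i (a ++ b) = a ++ del (i - length a) b.
Proof. revert i; induction a; intros i H; simpl in *. rewrite Nat.sub_0_r; auto.
  destruct i; simpl. lia. rewrite IHa; auto; lia. Qed.

Lemma inv_of l x y : Forall S l -> wp l = x -> x ⋅ y = ι -> wp (rev l) = y.
Proof.
  intros F E H. symmetry. apply (inv_uniq x); auto. subst x. apply (wp_rev R S HS); auto.
Qed.

Lemma rev_red l : red l -> red (rev l).
Proof.
  intros [F M]. split. apply Forall_rev; auto. intros l' F' E.
  rewrite length_rev, <- (length_rev l'). apply M. apply Forall_rev; auto.
  apply (inv_of l' (wp l')); auto. rewrite E. rewrite <- (rev_involutive l) at 2.
  apply (wp_rev R S HS). apply Forall_rev; auto.
Qed.

Lemma MinD_rev I J lw : (forall x, I x -> S x) -> (forall x, J x -> S x) -> Forall S lw ->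
  MinD I J lw -> MinD J I (rev lw).
Proof.
  intros HI HJ Fw M la lc lv Fa Fc Fv E.
  assert (FaS : Forall S la) by exact (Forall_impl _ HJ Fa).
  assert (FcS : Forall S lc) by exact (Forall_impl _ HI Fc).
  rewrite length_rev, <- (length_rev lv).
  apply (M (rev lc) (rev la)); try apply Forall_rev; auto.
  apply (inv_of lv (wp lv)); auto. rewrite E.
  destruct (wp_rev R S HS la FaS) as [A1 A2].
  destruct (wp_rev R S HS lc FcS) as [C1 C2].
  destruct (wp_rev R S HS lw Fw) as [W1 W2].
  rewrite !mA, (canc _ _ _ C1), (canc _ _ _ W2), A1. auto.
Qed.

Section DLs.
Variables I J : R -> Prop.
Hypothesis HI : forall x, I x -> S x.
Hypothesis HJ : forall x, J x -> S x.

Lemma DLleft lw la lc s : MinD I J lw -> Forall I la -> Forall J lc -> red (la ++ lw ++ lc) -> I s ->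
  exists la' lc', Forall I la' /\ Forall J lc' /\ red (la' ++ lw ++ lc') /\
    wp (la' ++ lw ++ lc') = s ⋅ wp (la ++ lw ++ lc).
Proof.
  intros M Fa Fc Hr Hs.
  destruct (EX R S HS s _ Hr (HI s Hs)) as [H|[i [Hi [Ei Ri]]]].
  - exists (s :: la), lc. split; [constructor; auto|]. split; auto.
  - destruct (Nat.lt_ge_cases i (length la)) as [C|C].
    + rewrite del_app_l in Ei, Ri by auto. exists (del i la), lc. split; [apply del_Forall; auto|]. split; auto.
    + rewrite del_app_r in Ei, Ri by auto. rewrite !length_app in Hi.
      destruct (Nat.lt_ge_cases (i - length la) (length lw)) as [C2|C2].
      * exfalso. rewrite del_app_l in Ei by auto.
        assert (FaS : Forall S la) by exact (Forall_impl _ HI Fa).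
        assert (FcS : Forall S lc) by exact (Forall_impl _ HJ Fc).
        assert (Fw : Forall S lw) by (destruct Hr as [F _]; apply Forall_app in F; destruct F as [_ F];
                                      apply Forall_app in F; tauto).
        assert (L := M (rev la ++ s :: la) [] (del (i - length la) lw)).
        rewrite del_len in L by auto.
        assert (length lw <= length lw - 1); [|lia].
        apply L.
        -- apply Forall_app. split. apply Forall_rev; auto. constructor; auto.
        -- constructor.
        -- apply del_Forall; auto.
        -- rewrite !wp_app in Ei. simpl in Ei. rewrite wp_app. simpl. rewrite m1r.
           destruct (wp_rev R S HS la FaS) as [A1 A2].
           destruct (wp_rev R S HS lc FcS) as [Cc1 Cc2].
           assert (E2 : wp (rev la) ⋅ (s ⋅ (wp la ⋅ (wp lw ⋅ wp lc))) ⋅ wp (rev lc) =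
                        wp (rev la) ⋅ (wp la ⋅ (wp (del (i - length la) lw) ⋅ wp lc)) ⋅ wp (rev lc))
             by (rewrite Ei; auto).
           rewrite !mA, !(canc _ _ _ Cc1), A2, m1l in E2. rewrite <- E2. rewrite !mA. auto.
      * rewrite del_app_r in Ei, Ri by auto.
        exists la, (del (i - length la - length lw) lc). split; auto. split; [apply del_Forall; auto|].
        split; auto.
Qed.

End DLs.

Lemma DLright I J (HI : forall x, I x -> S x) (HJ : forall x, J x -> S x) lw la lc t :
  Forall S lw -> MinD I J lw -> Forall I la -> Forall J lc -> red (la ++ lw ++ lc) -> J t ->
  exists la' lc', Forall I la' /\ Forall J lc' /\ red (la' ++ lw ++ lc') /\
    wp (la' ++ lw ++ lc') = wp (la ++ lw ++ lc) ⋅ t.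
Proof.
  intros Fw M Fa Fc Hr Ht.
  assert (Er : rev (la ++ lw ++ lc) = rev lc ++ rev lw ++ rev la)
    by (rewrite !rev_app_distr, app_assoc; auto).
  destruct (DLleft J I HJ HI (rev lw) (rev lc) (rev la) t) as [la2 [lc2 [F1 [F2 [R2 E2]]]]];
    auto using MinD_rev, Forall_rev.
  { rewrite <- Er. apply rev_red; auto. }
  exists (rev lc2), (rev la2). split; [apply Forall_rev; auto|]. split; [apply Forall_rev; auto|].
  assert (Er2 : rev (la2 ++ rev lw ++ lc2) = rev lc2 ++ lw ++ rev la2)
    by (rewrite !rev_app_distr, rev_involutive, app_assoc; auto).
  split.
  - rewrite <- Er2. apply rev_red; auto.
  - rewrite <- Er2. apply (inv_of _ (wp (la2 ++ rev lw ++ lc2))); auto. destruct R2; auto.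
    rewrite E2, <- Er. 
    assert (FL : Forall S (la ++ lw ++ lc)) by (destruct Hr; auto).
    destruct (wp_rev R S HS _ FL) as [A1 A2].
    rewrite !mA, (canc _ _ _ A2), (S_inv R S HS t (HJ t Ht)). auto.
Qed.

Section DL.
Variables I J : R -> Prop.
Hypothesis HI : forall x, I x -> S x.
Hypothesis HJ : forall x, J x -> S x.
Variable lw : list R.
Hypothesis Rw : red lw.
Hypothesis M : MinD I J lw.

Lemma DLr lc0 : Forall J lc0 -> exists la lc, Forall I la /\ Forall J lc /\ red (la ++ lw ++ lc) /\
    wp (la ++ lw ++ lc) = wp lw ⋅ wp lc0.
Proof.
  induction lc0 as [|t lc0 IH] using rev_ind; intro F.
  - exists [], []. simpl. rewrite app_nil_r, m1r. split; [constructor|]. split; [constructor|]. split; auto.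
  - apply Forall_app in F. destruct F as [F1 F2]. inversion F2 as [|? ? Ht _].
    destruct (IH F1) as [la [lc [Fa [Fc [Rr E]]]]].
    destruct (DLright I J HI HJ lw la lc t) as [la' [lc' [Fa' [Fc' [Rr' E']]]]]; auto.
    destruct Rw; auto.
    exists la', lc'. split; auto. split; auto. split; auto. rewrite E', E, wp_app. simpl. rewrite m1r, mA. auto.
Qed.

Lemma DLfull la0 lc0 : Forall I la0 -> Forall J lc0 -> exists la lc, Forall I la /\ Forall J lc /\
    red (la ++ lw ++ lc) /\ wp (la ++ lw ++ lc) = wp la0 ⋅ wp lw ⋅ wp lc0.
Proof.
  intros Fa0 Fc0. induction la0 as [|s la0 IH].
  - destruct (DLr lc0 Fc0) as [la [lc H]]. exists la, lc. simpl. rewrite m1l. auto.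
  - inversion Fa0 as [|? ? Hs Fa1]. destruct (IH Fa1) as [la [lc [Fa [Fc [Rr E]]]]].
    destruct (DLleft I J HI HJ lw la lc s) as [la' [lc' [Fa' [Fc' [Rr' E']]]]]; auto.
    exists la', lc'. split; auto. split; auto. split; auto. rewrite E', E. simpl. rewrite !mA. auto.
Qed.

Lemma C2 (L : R -> Prop) la0 lc0 k : (forall x, L x -> S x) -> Forall I la0 -> Forall J lc0 ->
  Forall L k -> wp k = wp la0 ⋅ wp lw ⋅ wp lc0 -> Forall L lw.
Proof.
  intros HL Fa0 Fc0 Fk E. destruct (DLfull la0 lc0 Fa0 Fc0) as [la [lc [Fa [Fc [Rr E2]]]]].
  assert (FL : Forall L (la ++ lw ++ lc)). { apply (SL R S HS L HL _ Rr k Fk). rewrite E2; auto. }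
  apply Forall_app in FL. destruct FL as [_ FL]. apply Forall_app in FL. tauto.
Qed.
End DL.

End Cox4.


Section Ren.
Variable R : monoid.
Local Infix "⋅" := (@mmul R) (at level 40, left associativity).
Local Notation "'ι'" := (@mone R).
Variables Lam S : R -> Prop.
Hypothesis HRC : gen_renner_coxeter R Lam S.
Local Notation wp := (wprod R).

Ltac msimp := repeat (rewrite ?mA, ?m1l, ?m1r);
  repeat match goal with H : ?a ⋅ ?b = ι |- _ =>
    progress (rewrite ?H, ?(canc R _ _ _ H)); repeat (rewrite ?mA, ?m1l, ?m1r) end.

Lemma HSc : coxeter_system R S.
Proof. destruct HRC as [_ [_ [_ [_ [_ [H _]]]]]]. auto. Qed.
Lemma idem_comm e f : idem R e -> idem R f -> e ⋅ f = f ⋅ e.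
Proof. destruct HRC as [[_ [_ H]] _]. auto. Qed.
Lemma Lam_idem e : Lam e -> idem R e.
Proof. destruct HRC as [_ [H _]]. auto. Qed.
Lemma Lam_ex e : idem R e -> exists f w, Lam f /\ is_unit R w /\ conj_to R w f e.
Proof. destruct HRC as [_ [_ [H _]]]. auto. Qed.
Lemma ECS4 e1 e2 : idem R e1 -> idem R e2 -> sle R e1 e2 ->
  exists w f1 f2, is_unit R w /\ Lam f1 /\ Lam f2 /\ sle R f1 f2 /\ conj_to R w f1 e1 /\ conj_to R w f2 e2.
Proof. destruct HRC as [_ [_ [_ [_ [_ [_ [H _]]]]]]]. auto. Qed.
Lemma ECS5 e : Lam e -> is_parabolic R S (W R e) /\ is_parabolic R S (Wstar R e).
Proof. destruct HRC as [_ [_ [_ [_ [_ [_ [_ [H _]]]]]]]]. auto. Qed.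
Lemma ECS6 e f : Lam e -> Lam f -> sle R e f -> forall s, lambda_star R S e s -> lambda_star R S f s.
Proof. destruct HRC as [_ [_ [_ [_ [_ [_ [_ [_ H]]]]]]]]. intros. apply (H e f); auto. Qed.

Lemma unit_inv w : is_unit R w -> exists w', w ⋅ w' = ι /\ w' ⋅ w = ι.
Proof. auto. Qed.
Lemma mk_conj w w' f e : w ⋅ w' = ι -> w' ⋅ w = ι -> w ⋅ f ⋅ w' = e -> conj_to R w f e.
Proof. intros; exists w'; auto. Qed.
Lemma mk_unit w w' : w ⋅ w' = ι -> w' ⋅ w = ι -> is_unit R w.
Proof. intros; exists w'; auto. Qed.

Lemma Lam_uniq f1 f2 x x' : Lam f1 -> Lam f2 -> x ⋅ x' = ι -> x' ⋅ x = ι -> x ⋅ f1 ⋅ x' = f2 -> f1 = f2.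
Proof.
  intros L1 L2 H1 H2 E. destruct HRC as [_ [_ [_ [H _]]]]. apply (H f1 f2 x); auto.
  exists x'; auto. exists x'; auto.
Qed.

Lemma idem_r g y : idem R g -> y ⋅ g ⋅ g = y ⋅ g.
Proof. intro H. rewrite <- mA, H. auto. Qed.

Lemma conj_idem x x' g : x' ⋅ x = ι -> idem R g -> idem R (x ⋅ g ⋅ x').
Proof. intros H1 H2. unfold idem. msimp. rewrite idem_r; auto. Qed.

Lemma conj_sle x x' a b : x' ⋅ x = ι -> sle R a b -> sle R (x ⋅ a ⋅ x') (x ⋅ b ⋅ x').
Proof.
  intros H [E1 E2]. split.
  - msimp. rewrite <- (mA x a b), E1. auto.
  - msimp. rewrite <- (mA x b a), E2. auto.
Qed.

Lemma sle_trans a b c : sle R a b -> sle R b c -> sle R a c.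
Proof.
  intros [E1 E2] [E3 E4]. split.
  - rewrite <- E1 at 1. rewrite <- mA, E3, E1. auto.
  - rewrite <- E2 at 1. rewrite mA, E4, E2. auto.
Qed.
Lemma sle_antisym a b : sle R a b -> sle R b a -> a = b.
Proof. intros [E1 E2] [E3 E4]. rewrite <- E1, E4. auto. Qed.
Lemma sle_mul a b c : sle R a b -> sle R a c -> sle R a (b ⋅ c).
Proof.
  intros [E1 E2] [E3 E4]. split.
  - rewrite mA, E1, E3. auto.
  - rewrite <- mA, E4, E2. auto.
Qed.

Lemma CC g x x' : Lam g -> x ⋅ x' = ι -> x' ⋅ x = ι -> sle R g (x ⋅ g ⋅ x') -> x ⋅ g ⋅ x' = g.
Proof.
  intros Lg H1 H2 Hs. pose proof (Lam_idem g Lg) as Ig.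
  destruct (ECS4 g (x ⋅ g ⋅ x')) as [t [p1 [p2 [Ut [L1 [L2 [S12 [C1 C2]]]]]]]]; auto.
  apply conj_idem; auto.
  destruct C1 as [t' [T1 [T2 E1]]]. pose proof (conj_inv t p2 _ C2 t' T1 T2) as E2.
  assert (p1 = g) by (apply (Lam_uniq p1 g t t'); auto). subst p1.
  assert (p2 = g).
  { apply (Lam_uniq p2 g (x' ⋅ t) (t' ⋅ x)); auto; try (msimp; auto).
    assert (Q : x' ⋅ t ⋅ p2 ⋅ t' ⋅ x = x' ⋅ (t ⋅ p2 ⋅ t') ⋅ x) by (rewrite !mA; auto). rewrite Q, E2. msimp. auto. }
  subst p2. rewrite <- E2. auto.
Qed.

End Ren.


Section Ren2.
Variable R : monoid.
Local Infix "⋅" := (@mmul R) (at level 40, left associativity).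
Local Notation "'ι'" := (@mone R).
Variables Lam S : R -> Prop.
Hypothesis HRC : gen_renner_coxeter R Lam S.
Local Notation wp := (wprod R).

Ltac msimp := repeat (rewrite ?mA, ?m1l, ?m1r);
  repeat match goal with H : ?a ⋅ ?b = ι |- _ =>
    progress (rewrite ?H, ?(canc R _ _ _ H)); repeat (rewrite ?mA, ?m1l, ?m1r) end.

Local Notation Sinv := (S_inv R S (HSc R Lam S HRC)).

Lemma DEC g l : Forall (fun s => S s /\ s ⋅ g = g ⋅ s) l ->
  exists ys lx, wp l = ys ⋅ wp lx /\ is_unit R ys /\ ys ⋅ g = g /\ g ⋅ ys = g /\
    Forall (lambda_star R S g) lx.
Proof.
  induction 1 as [|s l H0 F IH].
  - exists ι, []. simpl. split. symmetry; apply m1l. split. exists ι; split; apply m1l. split. apply m1l. split. apply m1r. constructor.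
  - destruct H0 as [Hs Hc]. destruct IH as [ys [lx [E [U [Y1 [Y2 FL]]]]]].
    assert (Us : is_unit R s) by (destruct (HSc R Lam S HRC) as [H _]; auto).
    destruct (classic (s ⋅ g = g)) as [Fx|NFx].
    + exists (s ⋅ ys), lx. simpl. rewrite E. split. apply mA. split. apply unit_mul; auto.
      split. rewrite <- mA, Y1, Fx. auto. rewrite mA, <- Hc, Fx, Y2. auto.
    + pose proof (Sinv s Hs) as ss.
      exists (s ⋅ ys ⋅ s), (s :: lx). simpl. split.
      { rewrite E. msimp. auto. }
      split. apply unit_mul; auto. apply unit_mul; auto.
      split. rewrite <- mA, Hc, mA, <- (mA s ys g), Y1, Hc. msimp. auto.
      split. rewrite !mA, <- Hc, <- (mA s g ys), Y2, Hc. msimp. auto.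
      constructor; auto. split; auto.
Qed.

Lemma comm_word h lx : Forall (fun s => s ⋅ h = h ⋅ s) lx -> wp lx ⋅ h = h ⋅ wp lx.
Proof.
  induction 1; simpl. rewrite m1l, m1r; auto. rewrite <- mA, IHForall, mA, H, <- mA. auto.
Qed.

Lemma W_word g u : Lam g -> W R g u ->
  exists l, Forall (fun s => S s /\ s ⋅ g = g ⋅ s) l /\ wp l = u.
Proof.
  intros Lg Wu. destruct (ECS5 R Lam S HRC g Lg) as [[K [HK HW]] _].
  apply HW in Wu. destruct Wu as [l [F E]]. exists l. split; auto.
  rewrite Forall_forall in *. intros s I. split. apply HK, F; auto.
  assert (W R g s) as [_ C]. { apply HW. exists [s]. split. constructor; auto. simpl. apply m1r. }
  auto.
Qed.

Lemma lstar_comm g h lx : Lam g -> Lam h -> sle R g h -> Forall (lambda_star R S g) lx ->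
  wp lx ⋅ h = h ⋅ wp lx.
Proof.
  intros Lg Lh Sgh F. apply comm_word. eapply Forall_impl; [|exact F].
  intros s Hs. destruct (ECS6 R Lam S HRC g h Lg Lh Sgh s Hs) as [_ [C _]]. auto.
Qed.

Lemma sle_refl a : idem R a -> sle R a a.
Proof. intro H; split; auto. Qed.

Lemma part1 m : forall e : nat -> R, (forall i, i < m -> idem R (e i)) ->
  (forall i, i + 1 < m -> sle R (e i) (e (i + 1))) ->
  exists (w : R) (f : nat -> R), is_unit R w /\ (forall i, i < m -> Lam (f i)) /\
    (forall i, i + 1 < m -> sle R (f i) (f (i + 1))) /\ (forall i, i < m -> conj_to R w (f i) (e i)).
Proof.
  induction m as [|m0 IH]; intros e Hid Hch.
  - exists ι, (fun _ => ι). split. exists ι; split; apply m1l. repeat split; intros; lia.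
  - destruct m0 as [|m1].
    + destruct (Lam_ex R Lam S HRC (e 0) (Hid 0 ltac:(lia))) as [f0 [w [L0 [U0 C0]]]].
      exists w, (fun _ => f0). split; auto. split; [intros; auto|]. split; [intros j Hj; lia|].
      intros j Hj. replace j with 0 by lia. auto.
    + destruct (IH e) as [w [f [Uw [Lf [Cf Kf]]]]];
        [intros i Hi; apply Hid; lia | intros i Hi; apply Hch; lia |].
      set (a := f m1). destruct Uw as [w' [Ww1 Ww2]].
      assert (La : Lam a) by (apply Lf; lia).
      pose proof (Lam_idem R Lam S HRC a La) as Ia.
      assert (Ea : w ⋅ a ⋅ w' = e m1) by (apply (conj_inv w); auto; apply Kf; lia).
      set (e' := w' ⋅ e (Datatypes.S m1) ⋅ w).
      assert (Ie' : idem R e') by (apply conj_idem; auto; apply Hid; lia).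
      assert (Sae : sle R a e').
      { replace a with (w' ⋅ e m1 ⋅ w). apply conj_sle; auto. replace (Datatypes.S m1) with (m1 + 1) by lia. apply Hch; lia.
        rewrite <- Ea. msimp. auto. }
      destruct (ECS4 R Lam S HRC a e' Ia Ie' Sae) as [u [g1 [g2 [Uu [L1 [L2 [S12 [C1 C2]]]]]]]].
      destruct C1 as [u' [U1 [U2 Eu]]].
      assert (g1 = a) by (apply (Lam_uniq R Lam S HRC g1 a u u'); auto). subst g1.
      assert (Wa : W R a u).
      { split; auto. rewrite <- Eu at 2. msimp. auto. }
      destruct (W_word a u La Wa) as [l [Fl El]].
      destruct (DEC a l Fl) as [ys [lx [Ey [Uy [Y1 [Y2 Fx]]]]]].
      assert (Cx : wp lx ⋅ g2 = g2 ⋅ wp lx) by (apply (lstar_comm a); auto).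
      assert (FxS : Forall S lx) by (eapply Forall_impl; [|exact Fx]; intros s [H _]; auto).
      destruct (wp_rev R S (HSc R Lam S HRC) lx FxS) as [X1 X2].
      destruct Uy as [ys' [Y3 Y4]].
      assert (Hc : u ⋅ g2 ⋅ (wp (rev lx) ⋅ ys') = e').
      { apply (conj_inv u g2 e' C2 (wp (rev lx) ⋅ ys')).
        - rewrite <- El, Ey. msimp. auto.
        - rewrite <- El, Ey. msimp. auto. }
      assert (Eg2 : ys ⋅ g2 ⋅ ys' = e').
      { rewrite <- Hc, <- El, Ey. rewrite <- (mA ys (wp lx) g2), Cx. msimp. auto. }
      exists (w ⋅ ys), (fun i => if Nat.ltb i (Datatypes.S m1) then f i else g2).
      split. apply (mk_unit R (w ⋅ ys) (ys' ⋅ w')); msimp; auto.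
      assert (Tr : forall i, i <= m1 -> sle R (f i) a).
      { intros i Hi. replace i with (m1 - (m1 - i)) by lia. generalize (m1 - i) as k. intro k.
        induction k. replace (m1 - 0) with m1 by lia. apply sle_refl; auto.
        destruct (Nat.lt_ge_cases k m1).
        - apply (sle_trans R _ (f (m1 - k))); auto.
          pose proof (Cf (m1 - Datatypes.S k) ltac:(lia)) as Q. replace (m1 - Datatypes.S k + 1) with (m1 - k) in Q by lia. exact Q.
        - replace (m1 - Datatypes.S k) with (m1 - k) by lia. auto. }
      split; [|split].
      * intros i Hi. destruct (Nat.ltb_spec i (Datatypes.S m1)); auto.
      * intros i Hi. destruct (Nat.ltb_spec i (Datatypes.S m1)); destruct (Nat.ltb_spec (i + 1) (Datatypes.S m1)); try lia.
        -- apply Cf; lia.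
        -- replace i with m1 by lia. fold a. auto.
      * intros i Hi. destruct (Nat.ltb_spec i (Datatypes.S m1)).
        -- destruct (Tr i ltac:(lia)) as [T1 T2].
           assert (Q1 : ys ⋅ f i = f i) by (rewrite <- T2, mA, Y1; auto).
           assert (Q2 : f i ⋅ ys' = f i).
           { assert (f i ⋅ ys = f i) by (rewrite <- T1, <- mA, Y2; auto).
             rewrite <- H0 at 1. msimp. auto. }
           apply (mk_conj R _ (ys' ⋅ w')); try (msimp; auto).
           rewrite <- (mA w ys (f i)), Q1, <- (mA w (f i) ys'), Q2.
           apply (conj_inv w); auto; apply Kf; lia.
        -- replace i with (Datatypes.S m1) by lia.
           apply (mk_conj R _ (ys' ⋅ w')); try (msimp; auto).
           assert (Q : w ⋅ ys ⋅ g2 ⋅ ys' ⋅ w' = w ⋅ (ys ⋅ g2 ⋅ ys') ⋅ w') by (rewrite !mA; auto).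
           rewrite Q, Eg2. unfold e'. msimp. auto.
Qed.

End Ren2.


Section Ren3.
Variable R : monoid.
Local Infix "⋅" := (@mmul R) (at level 40, left associativity).
Local Notation "'ι'" := (@mone R).
Variables Lam S : R -> Prop.
Hypothesis HRC : gen_renner_coxeter R Lam S.
Local Notation wp := (wprod R).

Ltac msimp := repeat (rewrite ?mA, ?m1l, ?m1r);
  repeat match goal with H : ?a ⋅ ?b = ι |- _ =>
    progress (rewrite ?H, ?(canc R _ _ _ H)); repeat (rewrite ?mA, ?m1l, ?m1r) end.

Local Notation HS := (HSc R Lam S HRC).

Lemma idem_mul a b : idem R a -> idem R b -> idem R (a ⋅ b).
Proof.
  intros Ia Ib. unfold idem. rewrite !mA, <- (mA a b a), (idem_comm R Lam S HRC b a); auto.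
  rewrite mA. unfold idem in Ia. rewrite Ia, (idem_r R b a Ib). auto.
Qed.

Lemma part2 e : Lam e -> (forall h, Lam h -> sle R e h) ->
  forall I : R -> Prop, is_lambda R S e I -> forall s, I s <-> S s.
Proof.
  intros Le Hl I [HI HW].
  pose proof (Lam_idem R Lam S HRC e Le) as Ie.
  assert (Key : forall w, is_unit R w -> w ⋅ e = e ⋅ w).
  { intros w [w' [W1 W2]].
    set (e' := w' ⋅ e ⋅ w).
    assert (Ie' : idem R e') by (apply conj_idem; auto).
    assert (Ik : idem R (e ⋅ e')) by (apply idem_mul; auto).
    assert (Sk : sle R (e ⋅ e') e').
    { split. rewrite (idem_r R e' e Ie'). auto.
      rewrite mA, <- (idem_comm R Lam S HRC e e' Ie Ie'), (idem_r R e' e Ie'). auto. }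
    destruct (ECS4 R Lam S HRC _ _ Ik Ie' Sk) as [t [p1 [p2 [Ut [L1 [L2 [S12 [C1 C2]]]]]]]].
    destruct C1 as [t' [T1 [T2 E1]]]. pose proof (conj_inv t p2 _ C2 t' T1 T2) as E2.
    assert (p2 = e).
    { apply (Lam_uniq R Lam S HRC p2 e (w ⋅ t) (t' ⋅ w')); auto; try (msimp; auto).
      assert (Q : w ⋅ t ⋅ p2 ⋅ t' ⋅ w' = w ⋅ (t ⋅ p2 ⋅ t') ⋅ w') by (rewrite !mA; auto).
      rewrite Q, E2. unfold e'. msimp. auto. }
    subst p2. assert (p1 = e) by (apply sle_antisym; auto). subst p1.
    assert (Ek : e ⋅ e' = e') by (rewrite <- E1; auto).
    assert (Se : sle R e' e).
    { split; auto. rewrite (idem_comm R Lam S HRC e' e Ie' Ie). auto. }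
    assert (Se2 : sle R e (w ⋅ e ⋅ w')).
    { replace e with (w ⋅ e' ⋅ w') at 1 by (unfold e'; msimp; auto). apply conj_sle; auto. }
    pose proof (CC R Lam S HRC e w w' Le W1 W2 Se2) as Ec.
    rewrite <- Ec at 2. msimp. auto. }
  intro s. split; auto. intro Hs.
  assert (Us : is_unit R s) by (destruct HS as [H _]; auto).
  assert (in_WI R I s) as [l [F E]] by (apply HW; split; auto).
  apply (C1 R S HS I s l); auto.
Qed.


Lemma core e f w : Lam e -> Lam f -> Red R S e f w ->
  exists g, e ⋅ w ⋅ f = g /\ Lam g /\ sle R g e /\ sle R g f /\ w ⋅ g = g /\ g ⋅ w = g.
Proof.
  intros Le Lf [Uw Hmin]. pose proof Uw as Uw0. destruct Uw as [w' [W1 W2]].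
  pose proof (Lam_idem R Lam S HRC e Le) as Ie. pose proof (Lam_idem R Lam S HRC f Lf) as If.
  set (f' := w ⋅ f ⋅ w').
  assert (If' : idem R f') by (apply conj_idem; auto).
  set (k := e ⋅ f').
  assert (Ik : idem R k) by (apply idem_mul; auto).
  assert (Ske : sle R k e).
  { unfold k. split.
    - rewrite <- mA, (idem_comm R Lam S HRC f' e If' Ie), mA, Ie. auto.
    - rewrite mA, Ie. auto. }
  assert (Skf : sle R k f').
  { unfold k. split.
    - rewrite (idem_r R f' e If'). auto.
    - rewrite mA, <- (idem_comm R Lam S HRC e f' Ie If'), (idem_r R f' e If'). auto. }
  destruct (ECS4 R Lam S HRC k e Ik Ie Ske) as [u [g1 [g2 [Uu [L1 [L2 [S12 [C1 C2]]]]]]]].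
  destruct C1 as [u' [U1 [U2 Eu]]]. pose proof (conj_inv u g2 e C2 u' U1 U2) as Eu2.
  assert (g2 = e) by (apply (Lam_uniq R Lam S HRC g2 e u u'); auto). subst g2.
  destruct (ECS4 R Lam S HRC k f' Ik If' Skf) as [v [h1 [h2 [Uv [M1 [M2 [S12' [D1 D2]]]]]]]].
  destruct D1 as [v' [V1 [V2 Ev]]]. pose proof (conj_inv v h2 f' D2 v' V1 V2) as Ev2.
  assert (h2 = f).
  { apply (Lam_uniq R Lam S HRC h2 f (w' ⋅ v) (v' ⋅ w)); auto; try (msimp; auto).
    assert (Q : w' ⋅ v ⋅ h2 ⋅ v' ⋅ w = w' ⋅ (v ⋅ h2 ⋅ v') ⋅ w) by (rewrite !mA; auto).
    rewrite Q, Ev2. unfold f'. msimp. auto. }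
  subst h2.
  assert (Ey : u' ⋅ v ⋅ h1 ⋅ (v' ⋅ u) = g1).
  { assert (Q : u' ⋅ v ⋅ h1 ⋅ (v' ⋅ u) = u' ⋅ (v ⋅ h1 ⋅ v') ⋅ u) by (rewrite !mA; auto).
    rewrite Q, Ev, <- Eu. msimp. auto. }
  assert (h1 = g1) by (apply (Lam_uniq R Lam S HRC h1 g1 (u' ⋅ v) (v' ⋅ u)); auto; msimp; auto).
  subst h1.
  set (y := u' ⋅ v). fold y in Ey.
  assert (Wy : W R g1 y).
  { split. apply (mk_unit R y (v' ⋅ u)); unfold y; msimp; auto.
    rewrite <- Ey at 2. unfold y. msimp. auto. }
  set (b := v' ⋅ w).
  assert (Cb : b ⋅ f = f ⋅ b).
  { assert (Eb : b ⋅ f ⋅ (w' ⋅ v) = f).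
    { unfold b. assert (Q : v' ⋅ w ⋅ f ⋅ (w' ⋅ v) = v' ⋅ (w ⋅ f ⋅ w') ⋅ v) by (rewrite !mA; auto).
      rewrite Q. fold f'. rewrite <- Ev2. msimp. auto. }
    rewrite <- Eb at 2. unfold b. msimp. auto. }
  assert (Ew : w = u ⋅ y ⋅ b) by (unfold y, b; msimp; auto).
  destruct (W_word R Lam S HRC g1 y L1 Wy) as [l [Fl El]].
  destruct (DEC R Lam S HRC g1 l Fl) as [ys [lx [Eys [Uys [Y1 [Y2 Fx]]]]]].
  assert (Cx : wp lx ⋅ f = f ⋅ wp lx) by (apply (lstar_comm R Lam S HRC g1); auto).
  assert (FxS : Forall S lx) by (eapply Forall_impl; [|exact Fx]; intros s [H _]; auto).
  destruct (wp_rev R S HS lx FxS) as [X1 X2].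
  set (c := wp lx ⋅ b).
  set (c' := w' ⋅ v ⋅ wp (rev lx)).
  assert (Cc1 : c ⋅ c' = ι) by (unfold c, c', b; msimp; auto).
  assert (Cc2 : c' ⋅ c = ι) by (unfold c, c', b; msimp; auto).
  assert (Wc : W R f c).
  { split. apply (mk_unit R c c'); auto. unfold c. rewrite <- mA, Cb, !mA, Cx. auto. }
  assert (Wu : W R e u).
  { split. apply (mk_unit R u u'); auto. rewrite <- Eu2 at 2. msimp. auto. }
  destruct Uys as [ys' [Y3 Y4]].
  assert (Ew2 : w = u ⋅ ys ⋅ c) by (rewrite Ew, <- El, Eys; unfold c; rewrite !mA; auto).
  destruct (ECS5 R Lam S HRC e Le) as [[I [HI HWI]] _].
  destruct (ECS5 R Lam S HRC f Lf) as [[J [HJ HWJ]] _].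
  destruct (ECS5 R Lam S HRC g1 L1) as [_ [L [HL HWL]]].
  destruct (proj1 (HWI u) Wu) as [la [Fa Ea]].
  destruct (proj1 (HWJ c) Wc) as [lc [Fc Ec]].
  assert (Wsy : Wstar R g1 ys) by (split; [apply (mk_unit R ys ys'); auto | split; auto]).
  destruct (proj1 (HWL ys) Wsy) as [lk [Fk Ek]].
  destruct HS as [_ [_ [Hgen _]]].
  destruct (Hgen w Uw0) as [l0 [F0 E0]].
  destruct (RW R S HS (length l0) l0 (le_n _) F0) as [lw [Rw [_ Ew0]]].
  rewrite E0 in Ew0.
  assert (M : MinD R S I J lw).
  { intros la0 lc0 lv Fa0 Fc0 Fv Ev0.
    destruct (Hmin (wp la0) (wp lc0) (wp lv) (length lv)) as [m [Hm [l2 [F2 [E2 L2']]]]].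
    - apply HWI. exists la0; auto.
    - apply HWJ. exists lc0; auto.
    - rewrite Ev0, Ew0. auto.
    - exists lv; auto.
    - destruct Rw as [_ Mw]. specialize (Mw l2 F2). rewrite E2, Ew0 in Mw. specialize (Mw eq_refl). lia. }
  assert (FaS : Forall S la) by exact (Forall_impl _ HI Fa).
  assert (FcS : Forall S lc) by exact (Forall_impl _ HJ Fc).
  assert (FwL : Forall L lw).
  { clear C2. apply (C2 R S HS I J HI HJ lw Rw M L (rev la) (rev lc) lk HL); try apply Forall_rev; auto.
    rewrite (inv_of R S HS la u u' FaS Ea U1), (inv_of R S HS lc c c' FcS Ec Cc1), Ek, Ew0, Ew2.
    msimp. auto. }
  assert (Wsw : Wstar R g1 w) by (apply HWL; exists lw; split; auto).
  destruct Wsw as [_ [G1 G2]].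
  assert (G3 : g1 ⋅ w' = g1) by (rewrite <- G2 at 1; msimp; auto).
  assert (Sgf' : sle R g1 f').
  { replace g1 with (w ⋅ g1 ⋅ w') at 1 by (rewrite G1; auto). apply conj_sle; auto. }
  assert (Sgk : sle R g1 (u ⋅ g1 ⋅ u')) by (rewrite Eu; unfold k; apply sle_mul; auto).
  pose proof (CC R Lam S HRC g1 u u' L1 U1 U2 Sgk) as Ek1. rewrite Eu in Ek1.
  exists g1. split; [|split; [auto|split; [auto|split; [auto|split; auto]]]].
  assert (Q : e ⋅ w ⋅ f = k ⋅ w) by (unfold k, f'; msimp; auto).
  rewrite Q, Ek1, G2. auto.
Qed.

Lemma W_inv g a a' : W R g a -> a ⋅ a' = ι -> a' ⋅ a = ι -> W R g a'.
Proof.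
  intros [_ C] H1 H2. split. apply (mk_unit R a' a); auto.
  assert (Q : a' ⋅ g = a' ⋅ (g ⋅ a) ⋅ a') by (msimp; auto). rewrite Q, <- C. msimp. auto.
Qed.

Lemma Red_inv e f w w' : Red R S e f w -> w ⋅ w' = ι -> w' ⋅ w = ι -> Red R S f e w'.
Proof.
  intros [Uw Hm] W1 W2. split. apply (mk_unit R w' w); auto.
  intros a b v n Wa Wb Ev [lv [Fv [E L]]].
  destruct Wa as [Ua Ca]. destruct Wb as [Ub Cb]. pose proof Ua as Ua0. pose proof Ub as Ub0.
  destruct Ua as [a' [A1 A2]]. destruct Ub as [b' [B1 B2]].
  destruct (Hm b' a' (wp (rev lv)) n) as [m [Hmn [l2 [F2 [E2 L2]]]]].
  - apply (W_inv e b b'); auto. split; auto.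
  - apply (W_inv f a a'); auto. split; auto.
  - apply (inv_of R S HS lv v); auto. rewrite Ev. msimp. auto.
  - exists (rev lv). split. apply Forall_rev; auto. split; auto. rewrite length_rev; auto.
  - exists m. split; auto. exists (rev l2). split. apply Forall_rev; auto. split.
    apply (inv_of R S HS l2 w); auto. rewrite length_rev; auto.
Qed.

Lemma MAX e f w w' h : w ⋅ w' = ι -> w' ⋅ w = ι -> idem R h -> idem R (e ⋅ w ⋅ f) ->
  sle R h e -> sle R h f -> h ⋅ w = w ⋅ h -> sle R h (e ⋅ w ⋅ f).
Proof.
  intros W1 W2 Ih Ig [He1 He2] [Hf1 Hf2] Cw.
  assert (Q1 : h ⋅ (e ⋅ w ⋅ f) = w ⋅ h).
  { rewrite !mA, He1, Cw, <- mA, Hf1. auto. }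
  assert (Q2 : e ⋅ w ⋅ f ⋅ h = h ⋅ w).
  { rewrite <- mA, Hf2, <- mA, <- Cw, mA, He2. auto. }
  assert (Q3 : h ⋅ w = w ⋅ h) by auto.
  pose proof (idem_mul h (e ⋅ w ⋅ f) Ih Ig) as I2. unfold idem in I2. rewrite Q1 in I2.
  assert (Q4 : h ⋅ w = h).
  { assert (Q5 : w' ⋅ (w ⋅ h ⋅ (w ⋅ h)) = w' ⋅ (w ⋅ h)) by (rewrite I2; auto).
    rewrite !mA, W2, !m1l in Q5.
    transitivity (h ⋅ w ⋅ h); [|exact Q5].
    rewrite <- (mA h w h), <- Cw, mA, Ih. auto. }
  split.
  - rewrite Q1, <- Q3, Q4. auto.
  - rewrite Q2, Q4. auto.
Qed.

End Ren3.

Theorem mainTheorem11 (R : monoid) (Lam S : R -> Prop)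
  (HRC : gen_renner_coxeter R Lam S) :
  (forall (m : nat) (e : nat -> R),
     (forall i, i < m -> idem R (e i)) ->
     (forall i, i + 1 < m -> sle R (e i) (e (i + 1))) ->
     exists (w : R) (f : nat -> R), is_unit R w /\
       (forall i, i < m -> Lam (f i)) /\
       (forall i, i + 1 < m -> sle R (f i) (f (i + 1))) /\
       (forall i, i < m -> conj_to R w (f i) (e i))) /\
  (forall e : R, Lam e -> (forall h, Lam h -> sle R e h) ->
     forall I : R -> Prop, is_lambda R S e I -> forall s, I s <-> S s) /\
  (forall e f w : R, Lam e -> Lam f -> Red R S e f w ->
     Lam (mmul (mmul e w) f) /\ sle R (mmul (mmul e w) f) e /\
     sle R (mmul (mmul e w) f) f /\ W R (mmul (mmul e w) f) w /\
     (forall h, Lam h -> sle R h e -> sle R h f -> W R h w ->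
        sle R h (mmul (mmul e w) f)) /\
     (forall w', mmul w w' = mone -> mmul w' w = mone ->
        mmul (mmul f w') e = mmul (mmul e w) f)).
Proof.
  split; [|split].
  - intros m e. apply (part1 R Lam S HRC); auto.
  - apply (part2 R Lam S HRC); auto.
  - intros e f w Le Lf Hr.
    pose proof Hr as Hr0. destruct Hr0 as [Uw _]. pose proof Uw as Uw0. destruct Uw0 as [w0 [W1 W2]].
    destruct (core R Lam S HRC e f w Le Lf Hr) as [g [E [Lg [Se [Sf [G1 G2]]]]]].
    assert (Ig : idem R (mmul (mmul e w) f)) by (rewrite E; apply (Lam_idem R Lam S HRC); auto).
    assert (Hmax : forall h, Lam h -> sle R h e -> sle R h f -> W R h w -> sle R h (mmul (mmul e w) f)).
    { intros h Lh He Hf [_ Ch]. apply (MAX R Lam S HRC e f w w0); auto. apply (Lam_idem R Lam S HRC); auto. }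
    rewrite E in *. split; auto. split; auto. split; auto. split.
    { split; auto. rewrite G1, G2. auto. }
    split; auto.
    intros w' V1 V2.
    destruct (core R Lam S HRC f e w' Lf Le (Red_inv R Lam S HRC e f w w' Hr V1 V2))
      as [g' [E' [Lg' [Sf' [Se' [H1 H2]]]]]].
    rewrite E'. apply (sle_antisym R).
    + apply Hmax; auto. split; auto.
      transitivity g'.
      * rewrite <- H1 at 1. rewrite mA, V1, m1l. auto.
      * rewrite <- H2 at 2. rewrite <- mA, V2, m1r. auto.
    + rewrite <- E'. apply (MAX R Lam S HRC f e w' w); auto.
      rewrite E'. apply (Lam_idem R Lam S HRC); auto.
      transitivity g.
      * assert (Q : g = mmul g w') by (rewrite <- G2 at 2; rewrite <- mA, V1, m1r; auto). exact (eq_sym Q).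
      * rewrite <- G1 at 2. rewrite mA, V2, m1l. auto.
Qed.
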